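(* Let $\Theta \subseteq \mathbb{R}^k$ and let $\{p_\theta\}_{\theta\in\Theta}$ be a family of probability densities (with respect to Lebesgue measure) on $\mathcal{X}\subseteq\mathbb{R}^d$. For each $\theta\in\Theta$ let $\ell_\theta:\mathcal{X}^2\to\mathbb{R}$ be a measurable function, and define the density of $(X,Y,Z)$ on $\mathcal{X}^2\times\{-1,0,1\}$ by $$q_\theta(x,y,z) = p_\theta(x)\,p_\theta(y)\,\mathbf{1}\{z=\operatorname{sign}(\ell_\theta(x,y))\}.$$ For $\theta^\star,\theta\in\Theta$ let $\mathcal{G}_0(\theta)=\{(x,y)\in\mathcal{X}^2 : |\ell_\theta(x,y)|>0\}$, $\mathcal{D}(\theta^\star,\theta)=\{(x,y)\in\mathcal{X}^2 : \ell_{\theta^\star}(x,y)\,\ell_\theta(x,y)<0\}$, and $$\widetilde{\mathrm{BC}}(\theta^\star,\theta)=\int_{\mathcal{D}(\theta^\star,\theta)\,\cup\,\left(\mathcal{G}_0(\theta^\star)^{\complement}\,\triangle\,\mathcal{G}_0(\theta)^{\complement}\right)} \sqrt{p_{\theta^\star}(x)p_{\theta^\star}(y)p_\theta(x)p_\theta(y)}\,\mathrm{d}x\,\mathrm{d}y .$$ Then $$\mathrm{H}(q_{\theta^\star},q_\theta)=\mathrm{H}(p_{\theta^\star}^{\otimes 2},p_\theta^{\otimes 2})+\widetilde{\mathrm{BC}}(\theta^\star,\theta),$$ where $p_\theta^{\otimes 2}(x,y)=p_\theta(x)p_\theta(y)$.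
   Context: For two probability distributions $P,Q$ with densities $p,q$ with respect to a common measure, the Bhattacharyya coefficient is $\mathrm{BC}(P,Q)=\int\sqrt{pq}$ (for $q_\theta$ the integral is over $\mathcal{X}^2$ with Lebesgue measure and summed over $z\in\{-1,0,1\}$), and the (squared) Hellinger distance is $\mathrm{H}(P,Q)=1-\mathrm{BC}(P,Q)$. $\triangle$ denotes symmetric difference of sets, and $\operatorname{sign}:\mathbb{R}\to\{-1,0,1\}$ is the usual sign function. *)

(* Defs.v *)
From HB Require Import structures.
From mathcomp Require Import all_boot all_order all_algebra.
From mathcomp Require Import all_classical all_reals all_analysis.
Set Implicit Arguments. Unset Strict Implicit. Unset Printing Implicit Defensive.
Import Order.TTheory GRing.Theory Num.Theory.
Local Open Scope classical_set_scope.
Local Open Scope ring_scope.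

(* Reference measure space (T, mu): plays the role of X ⊆ R^d with Lebesgue
   measure.  Pairs (x,y) live in (T * T) with the product measure mu \x mu. *)

Section Defs.
Context {d : measure_display} {T : measurableType d} {R : realType}.

Definition ptens2 (p : T -> R) (xy : T * T) : R := p xy.1 * p xy.2.

Definition qdens (p : T -> R) (l : T * T -> R) (xy : T * T) (z : int) : R :=
  ptens2 p xy * (z == sgz (l xy))%:R.

Definition BC2 (mu : {sigma_finite_measure set T -> \bar R}) (p1 p2 : T -> R)
  : \bar R :=
  (\int[mu \x mu]_(xy in [set: T * T]) (Num.sqrt (ptens2 p1 xy * ptens2 p2 xy))%:E)%E.

Definition H2 mu (p1 p2 : T -> R) : \bar R := (1 - BC2 mu p1 p2)%E.

Definition BCq (mu : {sigma_finite_measure set T -> \bar R})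
  (p1 : T -> R) (l1 : T * T -> R) (p2 : T -> R) (l2 : T * T -> R) : \bar R :=
  (\sum_(z <- [:: (-1)%R; 0%R; 1%R] : seq int)
     \int[mu \x mu]_(xy in [set: T * T])
        (Num.sqrt (qdens p1 l1 xy z * qdens p2 l2 xy z))%:E)%E.

Definition Hq mu p1 l1 p2 l2 : \bar R := (1 - BCq mu p1 l1 p2 l2)%E.

Definition G0 (l : T * T -> R) : set (T * T) := [set xy | 0 < `|l xy|].

Definition Dset (ls l : T * T -> R) : set (T * T) := [set xy | ls xy * l xy < 0].

Definition symdiff (A B : set (T * T)) : set (T * T) := (A `\` B) `|` (B `\` A).

Definition BCtilde (mu : {sigma_finite_measure set T -> \bar R})
  (ps : T -> R) (ls : T * T -> R) (p : T -> R) (l : T * T -> R) : \bar R :=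
  (\int[mu \x mu]_(xy in Dset ls l `|` symdiff (~` G0 ls) (~` G0 l))
     (Num.sqrt (ps xy.1 * ps xy.2 * p xy.1 * p xy.2))%:E)%E.

End Defs.

(* Main.v *)
Require Import Defs.
From HB Require Import structures.
From mathcomp Require Import all_boot all_order all_algebra.
From mathcomp Require Import all_classical all_reals all_analysis.
From mathcomp Require Import measurable_realfun.
From mathcomp Require Import ring lra.
Import Order.TTheory GRing.Theory Num.Theory.
Local Open Scope classical_set_scope.
Local Open Scope ring_scope.

Lemma ptens2_meas (R : realType) (d : measure_display) (T : measurableType d)
  (P : T -> R) : measurable_fun setT P -> measurable_fun setT (ptens2 P).
Proof.
move=> mP; apply: measurable_funM.
  exact: (measurableT_comp mP measurable_fst).
exact: (measurableT_comp mP measurable_snd).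
Qed.

Lemma tens_int1 (R : realType) (d : measure_display) (T : measurableType d)
  (mu : {sigma_finite_measure set T -> \bar R}) (P : T -> R) :
  measurable_fun setT P -> (forall x, 0 <= P x) ->
  (\int[mu]_(x in [set: T]) (P x)%:E = 1)%E ->
  (\int[mu \x mu]_(xy in [set: T * T]) (ptens2 P xy)%:E = 1)%E.
Proof.
move=> mP P0 P1.
rewrite (fubini_tonelli1 (fun xy => (ptens2 P xy)%:E)); last first.
- by move=> xy; rewrite lee_fin /ptens2 mulr_ge0.
- exact: (proj2 (measurable_EFinP _ (ptens2 P)) (ptens2_meas _ _ _ _ mP)).
transitivity (\int[mu]_x ((P x)%:E * \int[mu]_y (P y)%:E))%E.
  apply: eq_integral => x _; rewrite /fubini_F /ptens2 /=.
  under eq_integral do rewrite EFinM.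
  rewrite ge0_integralZl_EFin //.
  - by move=> y _; rewrite lee_fin.
  - exact: (proj2 (measurable_EFinP _ P) mP).
rewrite P1; under eq_integral do rewrite mule1.
exact: P1.
Qed.
Lemma key (R : realType) (a b : R) :
  (a * b < 0 \/ ((~ (0 < `|a|)) /\ ~ ~ (0 < `|b|) \/ (~ (0 < `|b|)) /\ ~ ~ (0 < `|a|))) <->
  ~ ( ((-1 == sgz a) && (-1 == sgz b)) \/ (((0 == sgz a) && (0 == sgz b)) \/ ((1 == sgz a) && (1 == sgz b)))).
Proof.
rewrite !normr_gt0.
case: (ltrgtP a 0) => ha; case: (ltrgtP b 0) => hb;
  rewrite ?ha ?hb ?mul0r ?mulr0 ?ltxx ?(ltr0_sgz ha) ?(gtr0_sgz ha) ?(ltr0_sgz hb) ?(gtr0_sgz hb)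
    ?(lt_eqF ha) ?(gt_eqF ha) ?(lt_eqF hb) ?(gt_eqF hb) ?sgz0 ?eqxx /=.
all: try rewrite (nmulr_rlt0 _ ha). all: try rewrite (pmulr_rlt0 _ ha).
all: rewrite ?hb ?(lt_gtF hb) ?(gt_ltF hb) /=.
all: split; intuition.
Qed.

Lemma msgz (R : realType) (d : measure_display) (T : measurableType d)
  (L : T -> R) (z : int) : measurable_fun setT L -> z \in [:: -1; 0; 1] ->
  measurable [set xy | z == sgz (L xy)].
Proof.
move=> mL; rewrite !inE => /or3P [/eqP->|/eqP->|/eqP->].
- have := measurable_fun_ltr mL (measurable_cst (0:R)) measurableT (I : measurable [set true]).
  rewrite setTI; congr measurable; apply/funext => x /=.
  by rewrite eq_sym (sgz_cp0 _).1.2.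
- have := measurable_fun_eqr mL (measurable_cst (0:R)) measurableT (I : measurable [set true]).
  rewrite setTI; congr measurable; apply/funext => x /=.
  by rewrite (eq_sym (0:int)) (sgz_cp0 _).2.
- have := measurable_fun_ltr (measurable_cst (0:R)) mL measurableT (I : measurable [set true]).
  rewrite setTI; congr measurable; apply/funext => x /=.
  by rewrite eq_sym (sgz_cp0 _).1.1.
Qed.

Theorem mainTheorem1 (R : realType) (d : measure_display) (T : measurableType d)
  (mu : {sigma_finite_measure set T -> \bar R})
  (k : nat) (Theta : set 'rV[R]_k)
  (p : 'rV[R]_k -> T -> R) (l : 'rV[R]_k -> T * T -> R)
  (hp_meas : forall th, Theta th -> measurable_fun [set: T] (p th))
  (hp_ge0 : forall th, Theta th -> forall x, 0 <= p th x)
  (hp_int1 : forall th, Theta th -> (\int[mu]_(x in [set: T]) (p th x)%:E = 1)%E)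
  (hl_meas : forall th, Theta th -> measurable_fun [set: T * T] (l th))
  (ths th : 'rV[R]_k) (hths : Theta ths) (hth : Theta th) :
  Hq mu (p ths) (l ths) (p th) (l th)
  = (H2 mu (p ths) (p th) + BCtilde mu (p ths) (l ths) (p th) (l th))%E.
Proof.
have mP := hp_meas _ hths; have mQ := hp_meas _ hth.
have P0 := hp_ge0 _ hths; have Q0 := hp_ge0 _ hth.
have P1 := hp_int1 _ hths; have Q1 := hp_int1 _ hth.
have mL1 := hl_meas _ hths; have mL2 := hl_meas _ hth.
move: mP mQ P0 Q0 P1 Q1 mL1 mL2.
set P := p ths; set Q := p th; set L1 := l ths; set L2 := l th.
move=> mP mQ P0 Q0 P1 Q1 mL1 mL2.
pose f := fun xy : T * T => Num.sqrt (ptens2 P xy * ptens2 Q xy).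
have mf : measurable_fun setT f.
  apply: (measurableT_comp (continuous_measurable_fun (@sqrt_continuous R))).
  by apply: measurable_funM; apply: ptens2_meas.
have mfE : measurable_fun setT (EFin \o f) by exact/measurable_EFinP.
have f0 : forall xy, (0 <= (f xy)%:E)%E by move=> xy; rewrite lee_fin sqrtr_ge0.
pose S (z : int) := [set xy | (z == sgz (L1 xy)) && (z == sgz (L2 xy))].
have mS : forall z, z \in [:: -1; 0; 1] -> measurable (S z).
  move=> z hz; rewrite /S (_ : [set _ | _] = [set xy | z == sgz (L1 xy)] `&` [set xy | z == sgz (L2 xy)]).
    by apply: measurableI; apply: msgz.
  by apply/funext => xy /=; apply/propext; split => [/andP[]|[-> ->]].
have gz : forall z, (\int[mu \x mu]_(xy in [set: T * T])
        (Num.sqrt (qdens P L1 xy z * qdens Q L2 xy z))%:E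
      = \int[mu \x mu]_(xy in S z) (f xy)%:E)%E.
  move=> z; rewrite [RHS]integral_mkcond; apply: eq_integral => xy _.
  rewrite /patch /qdens /f.
  case h1: (z == sgz (L1 xy)); case h2: (z == sgz (L2 xy)); [rewrite mem_set; [by rewrite !mulr1|by rewrite /S /= h1 h2] | rewrite memNset; [by rewrite ?mulr0 ?mul0r ?sqrtr0|by rewrite /S /= h1 h2] ..].
have mS1 : measurable (S (-1)) by apply: mS.
have mS0 : measurable (S 0) by apply: mS.
have mS2 : measurable (S 1) by apply: mS.
pose U := S (-1) `|` (S 0 `|` S 1).
have mU : measurable U by apply: measurableU => //; apply: measurableU.
have mfD : forall D, measurable_fun D (fun xy => (f xy)%:E).
  by move=> D; apply: (measurable_funS measurableT (@subsetT _ D) mfE).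
have fin : (\int[mu \x mu]_(xy in [set: T * T]) (f xy)%:E < +oo)%E.
  apply: (@le_lt_trans _ _ (\int[mu \x mu]_(xy in [set: T * T]) ((ptens2 P xy)%:E + (ptens2 Q xy)%:E))%E).
    apply: ge0_le_integral. all: try by [].
    - by apply: emeasurable_funD; apply: (proj2 (measurable_EFinP _ _)); apply: ptens2_meas.
    - move=> xy _; rewrite -EFinD lee_fin /f.
      have u0 : 0 <= ptens2 P xy by rewrite /ptens2 mulr_ge0.
      have v0 : 0 <= ptens2 Q xy by rewrite /ptens2 mulr_ge0.
      rewrite -(ger0_norm (addr_ge0 u0 v0)) -sqrtr_sqr ler_sqrt ?sqr_ge0 //.
      nra.
  rewrite ge0_integralD //.
  - by rewrite !tens_int1 // -EFinD ltry.
  - by move=> xy _; rewrite lee_fin /ptens2 mulr_ge0.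
  - by apply: (proj2 (measurable_EFinP _ _)); apply: ptens2_meas.
  - by move=> xy _; rewrite lee_fin /ptens2 mulr_ge0.
  - by apply: (proj2 (measurable_EFinP _ _)); apply: ptens2_meas.
rewrite /Hq /BCq !big_cons big_nil adde0 !gz.
rewrite -ge0_integral_setU //; last first.
  rewrite disj_set2E; apply/eqP/seteqP; split => // xy [/andP[/eqP e1 _] /andP[/eqP e2 _]].
  by rewrite -e2 in e1.
rewrite -ge0_integral_setU //; last first.
  rewrite disj_set2E; apply/eqP/seteqP; split => // xy
    [/andP[/eqP e1 _] [/andP[/eqP e2 _]|/andP[/eqP e2 _]]]; by rewrite -e2 in e1.
  exact: measurableU.
rewrite -/U.
rewrite /BCtilde (_ : Dset L1 L2 `|` symdiff (~` G0 L1) (~` G0 L2) = ~` U); last first.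
  apply/funext => xy; apply/propext; rewrite /Dset /symdiff /G0 /U /S /=.
  exact: key.
move: fin; rewrite /H2 /BC2 -/f.
rewrite -(setUv U) ge0_integral_setU //; last first.
  by rewrite disj_set2E setICr eqxx.
  exact: measurableC.
have X0 : (0 <= \int[mu \x mu]_(xy in U) (f xy)%:E)%E by apply: integral_ge0.
have Y0 : (0 <= \int[mu \x mu]_(xy in ~` U) (f xy)%:E)%E by apply: integral_ge0.
move: X0 Y0.
set X := (\int[mu \x mu]_(xy in U) (f xy)%:E)%E.
set Y := (\int[mu \x mu]_(xy in ~` U) (f xy)%:E)%E.
move=> X0 Y0 fin.
have : (X + Y)%E \is a fin_num by rewrite ge0_fin_numE // adde_ge0.
rewrite fin_numD => /andP[fX fY].
have -> : (\int[mu \x mu]_(xy in ~` U)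
      (Num.sqrt (P xy.1 * P xy.2 * Q xy.1 * Q xy.2))%:E)%E = Y.
  by apply: eq_integral => xy _; rewrite /f /ptens2 !mulrA.
rewrite -(fineK fX) -(fineK fY) -EFinD -!EFinB -EFinD.
congr EFin; ring.
Qed.
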